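(* Let $G_m$ be a bounded Vilenkin group and let $\varphi:P_+\to[1,\infty)$ be a nondecreasing function with $\limsup_{n\to\infty}\frac{\log^2(n+1)}{\varphi(n)}=+\infty$. Then the maximal operator $f\mapsto \sup_{n\in P_+}\frac{|\sigma_nf|}{\varphi(n)}$ is not bounded from $H_{1/2}(G_m)$ to $L_{1/2}(G_m)$; i.e., there is no constant $c<\infty$ such that $\big\|\sup_{n\in P_+}\frac{|\sigma_nf|}{\varphi(n)}\big\|_{L_{1/2}}\le c\|f\|_{H_{1/2}}$ for all martingales $f\in H_{1/2}(G_m)$.
   Context: Let $P_+$ be the positive integers and $P=P_+\cup\{0\}$. Let $m=(m_0,m_1,\dots)$ be a sequence of integers $m_k\ge 2$ with $\sup_k m_k<\infty$. $G_m$ is the complete direct product of the cyclic groups $Z_{m_k}$, with Haar measure $\mu$ = product of the uniform probability measures on $Z_{m_k}$. Put $M_0=1$, $M_{k+1}=m_kM_k$. For $x\in G_m$, $I_n(x)=\{y: y_j=x_j,\ 0\le j<n\}$. Every $n\in P$ is written uniquely as $n=\sum_j n_jM_j$, $n_j\in Z_{m_j}$. Rademacher functions $r_k(x)=\exp(2\pi i x_k/m_k)$; Vilenkin system $\psi_n=\prod_k r_k^{n_k}$. $\mathcal F_n$ is the $\sigma$-algebra generated by the sets $I_n(x)$. For a martingale $f=(f^{(n)})$ w.r.t. $(\mathcal F_n)$, $f^*=\sup_n|f^{(n)}|$; $H_p(G_m)$ consists of martingales with $\|f\|_{H_p}:=\|f^*\|_{L_p}<\infty$, $\|g\|_{L_p}=(\int|g|^pd\mu)^{1/p}$.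 $\hat f(i)=\lim_{k}\int f^{(k)}\overline{\psi_i}\,d\mu$, $S_nf=\sum_{k=0}^{n-1}\hat f(k)\psi_k$, $\sigma_nf=\frac1n\sum_{k=0}^{n-1}S_kf$. $\log$ denotes a fixed logarithm. *)

(* Defs.v *)
From Stdlib Require Import Reals Arith.
Open Scope R_scope.

Definition Cx : Type := (R * R)%type.
Definition C0 : Cx := (0, 0).
Definition Cadd (z w : Cx) : Cx := (fst z + fst w, snd z + snd w).
Definition Cmul (z w : Cx) : Cx :=
  (fst z * fst w - snd z * snd w, fst z * snd w + snd z * fst w).
Definition Cscale (a : R) (z : Cx) : Cx := (a * fst z, a * snd z).
Definition Cconj (z : Cx) : Cx := (fst z, - snd z).
Definition Cmod (z : Cx) : R := sqrt (fst z ^ 2 + snd z ^ 2).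

Fixpoint rsum (n : nat) (g : nat -> R) : R :=
  match n with O => 0 | S n' => rsum n' g + g n' end.
Fixpoint csum (n : nat) (g : nat -> Cx) : Cx :=
  match n with O => C0 | S n' => Cadd (csum n' g) (g n') end.

Fixpoint maxle (K : nat) (g : nat -> R) : R :=
  match K with O => g O | S K' => Rmax (maxle K' g) (g (S K')) end.
Fixpoint maxpos (N : nat) (g : nat -> R) : R :=
  match N with O => 0 | S N' => Rmax (maxpos N' g) (g (S N')) end.

Definition point_t := nat -> nat.
Definition inG (m : nat -> nat) (x : point_t) : Prop := forall k, (x k < m k)%nat.

Fixpoint Mk (m : nat -> nat) (k : nat) : nat :=
  match k with O => 1%nat | S k' => (m k' * Mk m k')%nat end.

Definition digit (m : nat -> nat) (n k : nat) : nat := ((n / Mk m k) mod m k)%nat.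

(* the t-th cylinder of level L (t < M_L), represented by its point with zero tail *)
Definition cpoint (m : nat -> nat) (L t : nat) : point_t :=
  fun j => if (j <? L)%nat then digit m t j else 0%nat.

(* Haar integral of an F_L-measurable function g *)
Definition integ (m : nat -> nat) (L : nat) (g : point_t -> R) : R :=
  / INR (Mk m L) * rsum (Mk m L) (fun t => g (cpoint m L t)).

(* psi_n(x) = prod_k r_k(x)^{n_k} = exp(2 pi i sum_k n_k x_k / m_k);
   n_k = 0 for k >= n+1 since M_k > n there *)
Definition psi (m : nat -> nat) (n : nat) (x : point_t) : Cx :=
  let th := 2 * PI * rsum (S n) (fun k => INR (digit m n k * x k) / INR (m k)) in
  (cos th, sin th).

Definition upd (x : point_t) (k a : nat) : point_t :=
  fun j => if (j =? k)%nat then a else x j.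

Definition martingale (m : nat -> nat) (f : nat -> point_t -> Cx) : Prop :=
  (forall k x y, inG m x -> inG m y -> (forall j, (j < k)%nat -> x j = y j) ->
      f k x = f k y) /\
  (forall k x, inG m x ->
      f k x = Cscale (/ INR (m k)) (csum (m k) (fun a => f (S k) (upd x k a)))).

(* hat f(i) = lim_k int f^(k) conj(psi_i); for a martingale the sequence is
   constant for k >= i+1 (psi_i is F_{i+1}-measurable), so we take k = i+1. *)
Definition fhat (m : nat -> nat) (f : nat -> point_t -> Cx) (i : nat) : Cx :=
  let g := fun x => Cmul (f (S i) x) (Cconj (psi m i x)) in
  (integ m (S i) (fun x => fst (g x)), integ m (S i) (fun x => snd (g x))).

Definition Sn (m : nat -> nat) (f : nat -> point_t -> Cx) (n : nat) (x : point_t) : Cx :=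
  csum n (fun k => Cmul (fhat m f k) (psi m k x)).

Definition sigma (m : nat -> nat) (f : nat -> point_t -> Cx) (n : nat) (x : point_t) : Cx :=
  Cscale (/ INR n) (csum n (fun k => Sn m f k x)).

(* integral of (max_{k<=K} |f^(k)|)^{1/2}; fstar = sup_K of these step functions,
   so int fstar^{1/2} = sup_K fstar_half_K (monotone convergence) *)
Definition fstar_half (m : nat -> nat) (f : nat -> point_t -> Cx) (K : nat) : R :=
  integ m K (fun x => sqrt (maxle K (fun k => Cmod (f k x)))).

(* integral of (max_{1<=n<=N} |sigma_n f|/phi(n))^{1/2} (F_N-measurable) *)
Definition Tphi_half (m : nat -> nat) (phi : nat -> R) (f : nat -> point_t -> Cx)
  (N : nat) : R :=
  integ m N (fun x => sqrt (maxpos N (fun n => Cmod (sigma m f n x) / phi n))).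

(* Main.v *)
Require Import Defs.
From Stdlib Require Import Reals Arith Bool Lia Lra Psatz FunctionalExtensionality Classical.
Open Scope R_scope.

Lemma rsum_ext n g1 g2 : (forall i, (i < n)%nat -> g1 i = g2 i) -> rsum n g1 = rsum n g2.
Proof. induction n; simpl; intros H; [reflexivity|]. rewrite IHn by (intros; apply H; lia). rewrite H by lia. reflexivity. Qed.

Lemma rsum_add p q g : rsum (p + q) g = rsum p g + rsum q (fun j => g (p + j)%nat).
Proof. induction q; simpl. rewrite Nat.add_0_r; ring. rewrite Nat.add_succ_r. simpl. rewrite IHq. ring. Qed.

Lemma rsum_split a b g : rsum (a * b) g = rsum a (fun i => rsum b (fun j => g (i*b + j)%nat)).
Proof. induction a; simpl; [reflexivity|]. rewrite Nat.add_comm, rsum_add, IHa. reflexivity. Qed.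

Lemma rsum_const n c : rsum n (fun _ => c) = INR n * c.
Proof. induction n; simpl; [ring|]. rewrite IHn. destruct n; simpl; ring. Qed.

Lemma rsum_scal n c g : rsum n (fun i => c * g i) = c * rsum n g.
Proof. induction n; simpl; [ring|]. rewrite IHn; ring. Qed.

Lemma rsum_plus n g1 g2 : rsum n (fun i => g1 i + g2 i) = rsum n g1 + rsum n g2.
Proof. induction n; simpl; [ring|]. rewrite IHn; ring. Qed.

Lemma rsum_minus n g1 g2 : rsum n (fun i => g1 i - g2 i) = rsum n g1 - rsum n g2.
Proof. induction n; simpl; [ring|]. rewrite IHn; ring. Qed.

Lemma rsum_le n g1 g2 : (forall i, (i < n)%nat -> g1 i <= g2 i) -> rsum n g1 <= rsum n g2.
Proof. induction n; simpl; intros H; [lra|]. pose proof (H n (Nat.lt_succ_diag_r n)). assert (rsum n g1 <= rsum n g2) by (apply IHn; intros; apply H; lia). lra. Qed.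

Lemma rsum_swap n k h : rsum n (fun t => rsum k (fun u => h u t)) = rsum k (fun u => rsum n (fun t => h u t)).
Proof. induction n; simpl. induction k; simpl; [reflexivity|]. rewrite <- IHk; ring.
  rewrite IHn. rewrite <- rsum_plus. reflexivity. Qed.

Lemma rsum_single n k0 g : (k0 < n)%nat -> (forall k, (k < n)%nat -> k <> k0 -> g k = 0) -> rsum n g = g k0.
Proof. induction n; intros Hk H; [lia|]. simpl. destruct (Nat.eq_dec k0 n).
  - subst. replace (rsum n g) with (rsum n (fun _ => 0)). rewrite rsum_const; ring.
    apply rsum_ext; intros; symmetry; apply H; lia.
  - rewrite IHn by (try lia; intros; apply H; lia). rewrite (H n) by lia. ring. Qed.

Lemma rsum_zero n g : (forall k, (k < n)%nat -> g k = 0) -> rsum n g = 0.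
Proof. intros H. rewrite (rsum_ext n g (fun _ => 0)) by auto. rewrite rsum_const; ring. Qed.

Lemma rsum_nat_id Q : rsum Q (fun j => INR j) = INR Q * (INR Q - 1) / 2.
Proof. induction Q; cbn [rsum]; [simpl; field|]. rewrite IHQ, S_INR. field. Qed.

Lemma csum_fst n g : fst (csum n g) = rsum n (fun i => fst (g i)).
Proof. induction n; simpl; [reflexivity|]. rewrite IHn; reflexivity. Qed.
Lemma csum_snd n g : snd (csum n g) = rsum n (fun i => snd (g i)).
Proof. induction n; simpl; [reflexivity|]. rewrite IHn; reflexivity. Qed.

Lemma Mk_pos m (hm : forall k, (2 <= m k)%nat) k : (0 < Mk m k)%nat.
Proof. induction k; simpl; [lia|]. pose proof (hm k). nia. Qed.

Lemma Mk_mul m j L : (j <= L)%nat -> exists P, Mk m L = (P * Mk m j)%nat.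
Proof. induction 1. exists 1%nat; lia. destruct IHle as [P HP]. exists (m m0 * P)%nat. simpl. rewrite HP. lia. Qed.

Lemma Mk_mul_lt m j L : (j < L)%nat -> exists P, Mk m L = (P * m j * Mk m j)%nat.
Proof. intros H. destruct (Mk_mul m (S j) L H) as [P HP]. exists P. rewrite HP. simpl. lia. Qed.

Lemma Mk_mono m (hm : forall k, (2 <= m k)%nat) j L : (j <= L)%nat -> (Mk m j <= Mk m L)%nat.
Proof. induction 1; [lia|]. simpl. pose proof (hm m0). nia. Qed.

Lemma Mk_S m (hm : forall k, (2 <= m k)%nat) K : (2 * Mk m K <= Mk m (S K))%nat.
Proof. simpl. pose proof (hm K). nia. Qed.

Lemma Mk_ge m (hm : forall k, (2 <= m k)%nat) k : (S k <= Mk m k)%nat.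
Proof. induction k; simpl; [lia|]. pose proof (hm k). nia. Qed.

Lemma Mk_le_pow m Bm (hb : forall k, (m k <= Bm)%nat) k : (Mk m k <= Bm ^ k)%nat.
Proof. induction k; simpl; [lia|]. pose proof (hb k). nia. Qed.

Lemma digit_split_lo m (hm : forall k, (2 <= m k)%nat) a t j L : (j < L)%nat ->
  digit m (a * Mk m L + t) j = digit m t j.
Proof. intros H. unfold digit. destruct (Mk_mul_lt m j L H) as [P HP]. rewrite HP.
  pose proof (Mk_pos m hm j). pose proof (hm j).
  replace (a * (P * m j * Mk m j) + t)%nat with ((a*P*m j) * Mk m j + t)%nat by ring.
  rewrite Nat.div_add_l by lia. rewrite (Nat.add_comm (a*P*m j)). rewrite Nat.Div0.mod_add. reflexivity. Qed.

Lemma digit_split_top m (hm : forall k, (2 <= m k)%nat) a t L : (t < Mk m L)%nat -> (a < m L)%nat ->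
  digit m (a * Mk m L + t) L = a.
Proof. intros Ht Ha. unfold digit. pose proof (Mk_pos m hm L).
  rewrite Nat.div_add_l by lia. rewrite (Nat.div_small t) by lia. rewrite Nat.add_0_r. apply Nat.mod_small; lia. Qed.

Lemma digit_big m n k : (n < Mk m k)%nat -> digit m n k = 0%nat.
Proof. intros H. unfold digit. rewrite Nat.div_small by lia. apply Nat.Div0.mod_0_l. Qed.

Lemma digit_lt m (hm : forall k, (2 <= m k)%nat) n k : (digit m n k < m k)%nat.
Proof. unfold digit. apply Nat.mod_upper_bound. pose proof (hm k); lia. Qed.

Lemma cpoint_split m (hm : forall k, (2 <= m k)%nat) L a t : (t < Mk m L)%nat -> (a < m L)%nat ->
  cpoint m (S L) (a * Mk m L + t) = upd (cpoint m L t) L a.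
Proof. intros Ht Ha. apply functional_extensionality; intros j. unfold cpoint, upd.
  destruct (Nat.eqb_spec j L).
  - subst. replace (L <? S L)%nat with true by (symmetry; apply Nat.ltb_lt; lia).
    apply digit_split_top; auto.
  - destruct (Nat.ltb_spec j L).
    + replace (j <? S L)%nat with true by (symmetry; apply Nat.ltb_lt; lia). apply digit_split_lo; auto.
    + replace (j <? S L)%nat with false by (symmetry; apply Nat.ltb_ge; lia). reflexivity. Qed.

Lemma integ_tower m (hm : forall k, (2 <= m k)%nat) L g :
  integ m (S L) g = / INR (m L) * rsum (m L) (fun a => integ m L (fun x => g (upd x L a))).
Proof. unfold integ. simpl Mk. rewrite rsum_split.
  rewrite rsum_scal. rewrite mult_INR. pose proof (Mk_pos m hm L). pose proof (hm L).
  assert (INR (m L) <> 0) by (apply not_0_INR; lia). assert (INR (Mk m L) <> 0) by (apply not_0_INR; lia).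
  rewrite Rinv_mult. rewrite Rmult_assoc. f_equal. f_equal.
  apply rsum_ext; intros a Ha. apply rsum_ext; intros t Ht. rewrite cpoint_split; auto.
Qed.

Lemma integ_ext m L g1 g2 : (forall x, g1 x = g2 x) -> integ m L g1 = integ m L g2.
Proof. intros H. replace g1 with g2; auto. apply functional_extensionality; auto. Qed.

Lemma integ_zero m L : integ m L (fun _ => 0) = 0.
Proof. unfold integ. rewrite rsum_const; ring. Qed.

Lemma integ_scal m L c g : integ m L (fun x => c * g x) = c * integ m L g.
Proof. unfold integ. rewrite rsum_scal. ring. Qed.

Lemma integ_const m (hm : forall k, (2 <= m k)%nat) L c : integ m L (fun _ => c) = c.
Proof. unfold integ. rewrite rsum_const. pose proof (Mk_pos m hm L).
  assert (INR (Mk m L) <> 0) by (apply not_0_INR; lia). field; auto. Qed.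

Lemma integ_le m (hm : forall k, (2 <= m k)%nat) L g1 g2 :
  (forall t, (t < Mk m L)%nat -> g1 (cpoint m L t) <= g2 (cpoint m L t)) -> integ m L g1 <= integ m L g2.
Proof. intros H. unfold integ. apply Rmult_le_compat_l.
  - left. apply Rinv_0_lt_compat. apply lt_0_INR. apply (Mk_pos m hm).
  - apply rsum_le. auto. Qed.

Lemma integ_rsum m L K h : integ m L (fun x => rsum K (fun u => h u x)) = rsum K (fun u => integ m L (h u)).
Proof. unfold integ. rewrite rsum_swap. rewrite <- rsum_scal. reflexivity. Qed.

Lemma integ_indep m (hm : forall k, (2 <= m k)%nat) L0 g :
  (forall x y, (forall j, (j < L0)%nat -> x j = y j) -> g x = g y) ->
  forall L, (L0 <= L)%nat -> integ m L g = integ m L0 g.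
Proof. intros Hg L HL. induction HL; [reflexivity|]. rewrite integ_tower by auto.
  rewrite <- IHHL. rewrite (rsum_ext _ _ (fun _ => integ m m0 g)).
  - rewrite rsum_const. pose proof (hm m0). assert (INR (m m0) <> 0) by (apply not_0_INR; lia). field; auto.
  - intros a Ha. apply integ_ext. intros x. apply Hg. intros j Hj. unfold upd.
    destruct (Nat.eqb_spec j m0); [lia|reflexivity]. Qed.

Fixpoint allz (L : nat) (x : point_t) : bool :=
  match L with O => true | S L' => allz L' x && (x L' =? 0)%nat end.

Lemma allz_spec L x : allz L x = true <-> forall j, (j < L)%nat -> x j = 0%nat.
Proof. induction L; simpl. split; intros; [lia|auto].
  rewrite andb_true_iff, IHL, Nat.eqb_eq. split.
  - intros [H1 H2] j Hj. destruct (Nat.eq_dec j L); [subst; auto|apply H1; lia].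
  - intros H. split; [intros; apply H; lia|apply H; lia]. Qed.

Lemma allz_ext L x y : (forall j, (j < L)%nat -> x j = y j) -> allz L x = allz L y.
Proof. induction L; simpl; intros H; [reflexivity|]. rewrite IHL by (intros; apply H; lia).
  rewrite H by lia. reflexivity. Qed.

Lemma allz_upd L x a : allz L (upd x L a) = allz L x.
Proof. apply allz_ext. intros j Hj. unfold upd. destruct (Nat.eqb_spec j L); [lia|reflexivity]. Qed.

Definition zero_pt : point_t := fun _ => 0%nat.

Lemma integ_allz m (hm : forall k, (2 <= m k)%nat) L : forall g,
  integ m L (fun x => if allz L x then g x else 0) = g zero_pt / INR (Mk m L).
Proof. induction L; intros g.
  - unfold integ. simpl. replace (cpoint m 0 0) with zero_pt.
    + field.
    + apply functional_extensionality; intros j. unfold cpoint. destruct j; reflexivity.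
  - rewrite integ_tower by auto. rewrite (rsum_single _ 0%nat).
    + rewrite (integ_ext _ _ _ (fun x => if allz L x then g (upd x L 0) else 0)).
      * rewrite IHL. replace (upd zero_pt L 0) with zero_pt.
        -- simpl Mk. rewrite mult_INR. pose proof (hm L). pose proof (Mk_pos m hm L).
           assert (INR (m L) <> 0) by (apply not_0_INR; lia). assert (INR (Mk m L) <> 0) by (apply not_0_INR; lia).
           field; auto.
        -- apply functional_extensionality; intros j. unfold upd, zero_pt. destruct (j =? L)%nat; reflexivity.
      * intros x. simpl. rewrite allz_upd. replace (upd x L 0%nat L) with 0%nat by (unfold upd; now rewrite Nat.eqb_refl). simpl.
        rewrite andb_true_r. reflexivity.
    + pose proof (hm L); lia.
    + intros a Ha Ha0. transitivity (integ m L (fun _ => 0)); [|apply integ_zero]. apply integ_ext. intros x. simpl.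
      rewrite allz_upd. replace (upd x L a L) with a by (unfold upd; now rewrite Nat.eqb_refl).
      destruct (Nat.eqb_spec a 0); [lia|]. rewrite andb_false_r. reflexivity.
Qed.

Definition E m L x : R := if allz L x then INR (Mk m L) else 0.
Definition fK m K : nat -> point_t -> Cx := fun k x =>
  (E m (Nat.min k (S K)) x - E m (Nat.min k K) x, 0).

Lemma upd_same x L a : upd x L a L = a.
Proof. unfold upd. now rewrite Nat.eqb_refl. Qed.

Lemma avgE m (hm : forall k, (2 <= m k)%nat) k l x :
  E m (Nat.min k l) x = / INR (m k) * rsum (m k) (fun a => E m (Nat.min (S k) l) (upd x k a)).
Proof. pose proof (hm k). assert (INR (m k) <> 0) by (apply not_0_INR; lia).
  destruct (Nat.lt_ge_cases k l).
  - rewrite Nat.min_l by lia. rewrite Nat.min_l by lia. rewrite (rsum_single _ 0%nat); cycle 1.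
    { lia. }
    { intros a Ha Ha0; unfold E; simpl; rewrite upd_same; destruct (Nat.eqb_spec a 0); [lia|].
      rewrite andb_false_r; reflexivity. }
    unfold E. simpl. rewrite allz_upd, upd_same. simpl. rewrite andb_true_r.
    destruct (allz k x); [|ring]. rewrite mult_INR. field; auto.
  - rewrite Nat.min_r by lia. rewrite Nat.min_r by lia.
    rewrite (rsum_ext _ _ (fun _ => E m l x)).
    + rewrite rsum_const. field; auto.
    + intros a Ha. unfold E. rewrite (allz_ext l (upd x k a) x); auto.
      intros j Hj. unfold upd. destruct (Nat.eqb_spec j k); [lia|auto]. Qed.

Lemma E_ext m L x y : (forall j, (j < L)%nat -> x j = y j) -> E m L x = E m L y.
Proof. intros H. unfold E. rewrite (allz_ext L x y H). reflexivity. Qed.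

Lemma fK_mart m (hm : forall k, (2 <= m k)%nat) K : martingale m (fK m K).
Proof. split.
  - intros k x y _ _ H. unfold fK. rewrite (E_ext m (Nat.min k (S K)) x y), (E_ext m (Nat.min k K) x y); auto.
    all: intros; apply H; lia.
  - intros k x _. unfold fK, Cscale. f_equal.
    + rewrite csum_fst. simpl. rewrite rsum_minus, Rmult_minus_distr_l.
      rewrite (avgE m hm k (S K) x), (avgE m hm k K x). reflexivity.
    + rewrite csum_snd. simpl. rewrite rsum_const. ring. Qed.

Lemma cos_tele th n : 2 * sin (th/2) * rsum n (fun a => cos (INR a * th)) = sin (INR n * th - th/2) + sin (th/2).
Proof. induction n; cbn [rsum].
  - replace (INR 0 * th - th/2) with (- (th/2)) by (simpl; ring). rewrite sin_neg. ring.
  - rewrite Rmult_plus_distr_l, IHn. rewrite S_INR.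
    replace ((INR n + 1) * th - th / 2) with (INR n * th + th/2) by field.
    replace (INR n * th - th / 2) with (INR n * th + - (th/2)) by ring.
    rewrite !sin_plus, sin_neg, cos_neg. ring. Qed.

Lemma sin_tele th n : 2 * sin (th/2) * rsum n (fun a => sin (INR a * th)) = cos (th/2) - cos (INR n * th - th/2).
Proof. induction n; cbn [rsum].
  - replace (INR 0 * th - th/2) with (- (th/2)) by (simpl; ring). rewrite cos_neg. ring.
  - rewrite Rmult_plus_distr_l, IHn. rewrite S_INR.
    replace ((INR n + 1) * th - th / 2) with (INR n * th + th/2) by field.
    replace (INR n * th - th / 2) with (INR n * th + - (th/2)) by ring.
    rewrite !cos_plus, sin_neg, cos_neg. ring. Qed.

Lemma root_sums d mm : (0 < d < mm)%nat ->
  rsum mm (fun a => cos (INR a * (2 * PI * INR d / INR mm))) = 0 /\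
  rsum mm (fun a => sin (INR a * (2 * PI * INR d / INR mm))) = 0.
Proof. intros [H1 H2]. set (th := 2 * PI * INR d / INR mm).
  assert (Hm : 0 < INR mm) by (apply lt_0_INR; lia).
  assert (Hd : 0 < INR d) by (apply lt_0_INR; lia).
  assert (Hdm : INR d < INR mm) by (apply lt_INR; lia).
  assert (Hs : 0 < sin (th/2)).
  { apply sin_gt_0. unfold th. pose proof PI_RGT_0. apply Rmult_lt_0_compat; [|lra].
    apply Rmult_lt_0_compat; [|apply Rinv_0_lt_compat; lra]. nra.
    unfold th. apply (Rmult_lt_reg_r (INR mm)); auto. unfold Rdiv. field_simplify; [|lra].
    pose proof PI_RGT_0. nra. }
  assert (Hn : INR mm * th - th/2 = - (th/2) + 2 * INR d * PI) by (unfold th; field; lra).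
  split.
  - pose proof (cos_tele th mm). rewrite Hn, sin_period, sin_neg in H.
    apply (Rmult_eq_reg_l (2 * sin (th/2))); [|lra]. rewrite H. ring.
  - pose proof (sin_tele th mm). rewrite Hn, cos_period, cos_neg in H.
    apply (Rmult_eq_reg_l (2 * sin (th/2))); [|lra]. rewrite H. ring. Qed.

Lemma psi_dep m (hm : forall k, (2 <= m k)%nat) K i x y : (i < Mk m (S K))%nat ->
  (forall j, (j < S K)%nat -> x j = y j) -> psi m i x = psi m i y.
Proof. intros Hi H. unfold psi. rewrite (rsum_ext _ _ (fun k => INR (digit m i k * y k) / INR (m k))). reflexivity.
  intros k Hk. destruct (Nat.lt_ge_cases k (S K)). rewrite H; auto.
  rewrite digit_big. reflexivity. pose proof (Mk_mono m hm (S K) k H0). lia. Qed.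

Lemma psi_upd_zero m i K a : (K < S i)%nat ->
  psi m i (upd zero_pt K a) = (cos (INR a * (2 * PI * INR (digit m i K) / INR (m K))),
                               sin (INR a * (2 * PI * INR (digit m i K) / INR (m K)))).
Proof. intros HK. unfold psi. rewrite (rsum_single _ K); auto.
  - unfold upd. rewrite Nat.eqb_refl. rewrite mult_INR.
    replace (2 * PI * (INR (digit m i K) * INR a / INR (m K))) with
      (INR a * (2 * PI * INR (digit m i K) / INR (m K))) by (unfold Rdiv; ring). reflexivity.
  - intros k Hk Hne. unfold upd. destruct (Nat.eqb_spec k K); [lia|]. unfold zero_pt.
    rewrite Nat.mul_0_r. simpl. unfold Rdiv; ring. Qed.

Lemma fhat_low m (hm : forall k, (2 <= m k)%nat) K i : (i < K)%nat -> fhat m (fK m K) i = (0, 0).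
Proof. intros Hi. unfold fhat, fK. rewrite Nat.min_l by lia. rewrite Nat.min_l by lia.
  f_equal.
  - transitivity (integ m (S i) (fun _ => 0)); [apply integ_ext|apply integ_zero]. intros x. simpl. ring.
  - transitivity (integ m (S i) (fun _ => 0)); [apply integ_ext|apply integ_zero]. intros x. simpl. ring. Qed.

Lemma fhat_formula m (hm : forall k, (2 <= m k)%nat) K i : (K <= i)%nat -> (i < Mk m (S K))%nat ->
  let th := 2 * PI * INR (digit m i K) / INR (m K) in
  fhat m (fK m K) i = (1 - / INR (m K) * rsum (m K) (fun a => cos (INR a * th)),
                       / INR (m K) * rsum (m K) (fun a => sin (INR a * th))).
Proof. intros HK Hi th. unfold fhat, fK. rewrite Nat.min_r by lia. rewrite Nat.min_r by lia.
  pose proof (hm K). pose proof (Mk_pos m hm K).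
  assert (HmK : INR (m K) <> 0) by (apply not_0_INR; lia).
  assert (HMK : INR (Mk m K) <> 0) by (apply not_0_INR; lia).
  f_equal.
  - rewrite (integ_ext _ _ _ (fun x => (E m (S K) x - E m K x) * fst (psi m i x)))
      by (intros x; simpl; ring).
    rewrite (integ_indep m hm (S K)); [|intros x y Hxy; rewrite (E_ext m (S K) x y), (E_ext m K x y), (psi_dep m hm K i x y); auto; intros; apply Hxy; lia|lia].
    rewrite integ_tower by auto.
    rewrite (rsum_ext _ _ (fun a => (((if (a =? 0)%nat then INR (Mk m (S K)) else 0) - INR (Mk m K)) * cos (INR a * th)) / INR (Mk m K))).
    + rewrite (rsum_ext _ _ (fun a => (if (a =? 0)%nat then INR (Mk m (S K)) else 0) * cos (INR a * th) / INR (Mk m K) - cos (INR a * th))).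
      2:{ intros a Ha. field. auto. }
      rewrite rsum_minus. rewrite (rsum_single _ 0%nat); [|lia|intros a Ha Ha0; destruct (Nat.eqb_spec a 0); [lia|]; unfold Rdiv; ring].
      simpl Nat.eqb. cbv iota. rewrite Rmult_0_l, cos_0. simpl Mk. rewrite mult_INR. field. auto.
    + intros a Ha. rewrite (integ_ext _ _ _ (fun x => if allz K x then ((if (a =? 0)%nat then INR (Mk m (S K)) else 0) - INR (Mk m K)) * fst (psi m i (upd x K a)) else 0)).
      * rewrite (integ_allz m hm K (fun y => ((if (a =? 0)%nat then INR (Mk m (S K)) else 0) - INR (Mk m K)) * fst (psi m i (upd y K a)))).
        rewrite psi_upd_zero by lia. reflexivity.
      * intros x. unfold E. simpl. rewrite allz_upd, upd_same. destruct (allz K x); simpl; [|ring].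
        destruct (a =? 0)%nat; reflexivity.
  - rewrite (integ_ext _ _ _ (fun x => - ((E m (S K) x - E m K x) * snd (psi m i x))))
      by (intros x; simpl; ring).
    rewrite (integ_indep m hm (S K)); [|intros x y Hxy; rewrite (E_ext m (S K) x y), (E_ext m K x y), (psi_dep m hm K i x y); auto; intros; apply Hxy; lia|lia].
    rewrite integ_tower by auto.
    rewrite (rsum_ext _ _ (fun a => - ((((if (a =? 0)%nat then INR (Mk m (S K)) else 0) - INR (Mk m K)) * sin (INR a * th)) / INR (Mk m K)))).
    + rewrite (rsum_ext _ _ (fun a => sin (INR a * th) - (if (a =? 0)%nat then INR (Mk m (S K)) else 0) * sin (INR a * th) / INR (Mk m K))).
      2:{ intros a Ha. field. auto. }
      rewrite rsum_minus. rewrite (rsum_single _ 0%nat (fun a => (if (a =? 0)%nat then INR (Mk m (S K)) else 0) * sin (INR a * th) / INR (Mk m K))); [|lia|intros a Ha Ha0; destruct (Nat.eqb_spec a 0); [lia|]; unfold Rdiv; ring].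
      simpl Nat.eqb. cbv iota. rewrite Rmult_0_l, sin_0. field. auto.
    + intros a Ha. rewrite (integ_ext _ _ _ (fun x => if allz K x then - (((if (a =? 0)%nat then INR (Mk m (S K)) else 0) - INR (Mk m K)) * snd (psi m i (upd x K a))) else 0)).
      * rewrite (integ_allz m hm K (fun y => - (((if (a =? 0)%nat then INR (Mk m (S K)) else 0) - INR (Mk m K)) * snd (psi m i (upd y K a))))).
        rewrite psi_upd_zero by lia. cbn [snd]. unfold th. unfold Rdiv. ring.
      * intros x. unfold E. simpl. rewrite allz_upd, upd_same. destruct (allz K x); simpl; [|ring].
        destruct (a =? 0)%nat; reflexivity.
Qed.

Lemma fhat_lo m (hm : forall k, (2 <= m k)%nat) K i : (i < Mk m K)%nat -> fhat m (fK m K) i = (0, 0).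
Proof. intros Hi. destruct (Nat.lt_ge_cases i K). apply fhat_low; auto.
  assert (Hi2 : (i < Mk m (S K))%nat) by (pose proof (Mk_S m hm K); lia).
  rewrite (fhat_formula m hm K i H Hi2). rewrite digit_big by auto.
  pose proof (hm K). assert (HmK : INR (m K) <> 0) by (apply not_0_INR; lia).
  rewrite (rsum_ext _ _ (fun _ => 1)), (rsum_ext _ (fun a => sin _) (fun _ => 0)).
  - rewrite !rsum_const. f_equal; field; auto.
  - intros. simpl. replace (INR i0 * (2 * PI * 0 / INR (m K))) with 0 by (field; auto). apply sin_0.
  - intros. simpl. replace (INR i0 * (2 * PI * 0 / INR (m K))) with 0 by (field; auto). apply cos_0. Qed.

Lemma fhat_hi m (hm : forall k, (2 <= m k)%nat) K i : (Mk m K <= i)%nat -> (i < Mk m (S K))%nat ->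
  fhat m (fK m K) i = (1, 0).
Proof. intros H1 H2. pose proof (Mk_ge m hm K).
  rewrite (fhat_formula m hm K i) by lia.
  assert (Hd : (0 < digit m i K < m K)%nat).
  { unfold digit. pose proof (Mk_pos m hm K). simpl in H2.
    assert (1 <= i / Mk m K)%nat by (apply Nat.div_le_lower_bound; lia).
    assert (i / Mk m K < m K)%nat by (apply Nat.Div0.div_lt_upper_bound; lia).
    rewrite Nat.mod_small; lia. }
  destruct (root_sums _ _ Hd) as [Hc Hs]. rewrite Hc, Hs. f_equal; ring. Qed.

Lemma double_sum A Q u c : (forall i, (i < A)%nat -> u i = 0) -> (forall i, (A <= i < A + Q)%nat -> u i = c) ->
  rsum (A + Q) (fun k => rsum k u) = c * (INR Q * (INR Q - 1) / 2).
Proof. intros H0 H1.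
  assert (Hlo : forall k, (k <= A)%nat -> rsum k u = 0) by (intros; apply rsum_zero; intros; apply H0; lia).
  assert (Hhi : forall j, (j <= Q)%nat -> rsum (A + j) u = INR j * c).
  { intros j Hj. rewrite rsum_add, Hlo by lia. rewrite (rsum_ext _ _ (fun _ => c)). rewrite rsum_const; ring.
    intros; apply H1; lia. }
  rewrite rsum_add. rewrite rsum_zero by (intros; apply Hlo; lia).
  rewrite (rsum_ext _ _ (fun j => c * INR j)). rewrite rsum_scal, rsum_nat_id. ring.
  intros; rewrite Hhi by lia; ring. Qed.

Lemma psi_at m (hm : forall k, (2 <= m k)%nat) K tau x i : (tau < K)%nat -> allz tau x = true ->
  (Mk m K <= i < Mk m K + Mk m tau)%nat ->
  psi m i x = (cos (2 * PI * (INR (x K) / INR (m K))), sin (2 * PI * (INR (x K) / INR (m K)))).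
Proof. intros HtK Hx Hi. rewrite allz_spec in Hx. pose proof (Mk_ge m hm K).
  pose proof (Mk_mono m hm tau K ltac:(lia)). pose proof (Mk_S m hm K).
  destruct (Nat.le_exists_sub (Mk m K) i) as [j [Hj _]]; [lia|]. 
  assert (Hi' : i = (1 * Mk m K + j)%nat) by lia.
  unfold psi. rewrite (rsum_single _ K); [| lia |].
  - replace (digit m i K) with 1%nat. rewrite Nat.mul_1_l. reflexivity.
    rewrite Hi'. symmetry. apply digit_split_top; auto; pose proof (hm K); lia.
  - intros k Hk Hne. destruct (Nat.lt_ge_cases k tau).
    + rewrite Hx by auto. rewrite Nat.mul_0_r. simpl. unfold Rdiv; ring.
    + destruct (Nat.lt_ge_cases k K).
      * rewrite Hi'. rewrite digit_split_lo by auto. rewrite (digit_big m j k). simpl. unfold Rdiv; ring.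
        pose proof (Mk_mono m hm tau k H2). lia.
      * rewrite digit_big. simpl. unfold Rdiv; ring. pose proof (Mk_mono m hm (S K) k ltac:(lia)). lia. Qed.

Lemma sigma_val m (hm : forall k, (2 <= m k)%nat) K tau x : (tau < K)%nat -> allz tau x = true ->
  Cmod (Defs.sigma m (fK m K) (Mk m K + Mk m tau) x) =
  INR (Mk m tau) * (INR (Mk m tau) - 1) / 2 / INR (Mk m K + Mk m tau).
Proof. intros HtK Hx. set (th := 2 * PI * (INR (x K) / INR (m K))).
  pose proof (Mk_mono m hm tau K ltac:(lia)). pose proof (Mk_S m hm K). pose proof (Mk_pos m hm tau).
  assert (Hf : fst (csum (Mk m K + Mk m tau) (fun k => Sn m (fK m K) k x)) = cos th * (INR (Mk m tau) * (INR (Mk m tau) - 1) / 2)).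
  { rewrite csum_fst. unfold Sn. rewrite (rsum_ext _ _ (fun k => rsum k (fun i => fst (Cmul (fhat m (fK m K) i) (psi m i x))))).
    2:{ intros; apply csum_fst. }
    apply double_sum.
    - intros i Hi. rewrite fhat_lo by auto. simpl. ring.
    - intros i Hi. rewrite (fhat_hi m hm) by lia. rewrite (psi_at m hm K tau x i) by auto. simpl. unfold th. ring. }
  assert (Hs : snd (csum (Mk m K + Mk m tau) (fun k => Sn m (fK m K) k x)) = sin th * (INR (Mk m tau) * (INR (Mk m tau) - 1) / 2)).
  { rewrite csum_snd. unfold Sn. rewrite (rsum_ext _ _ (fun k => rsum k (fun i => snd (Cmul (fhat m (fK m K) i) (psi m i x))))).
    2:{ intros; apply csum_snd. }
    apply double_sum.
    - intros i Hi. rewrite fhat_lo by auto. simpl. ring.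
    - intros i Hi. rewrite (fhat_hi m hm) by lia. rewrite (psi_at m hm K tau x i) by auto. simpl. unfold th. ring. }
  unfold Defs.sigma, Cmod, Cscale. cbn [fst snd]. rewrite Hf, Hs.
  set (S := INR (Mk m tau) * (INR (Mk m tau) - 1) / 2).
  assert (HS : 0 <= S).
  { unfold S. assert (1 <= INR (Mk m tau)) by (apply (le_INR 1); lia). nra. }
  assert (Hn : 0 < INR (Mk m K + Mk m tau)) by (apply lt_0_INR; lia).
  replace ((/ INR (Mk m K + Mk m tau) * (cos th * S)) ^ 2 + (/ INR (Mk m K + Mk m tau) * (sin th * S)) ^ 2)
    with ((S / INR (Mk m K + Mk m tau)) ^ 2 * (sin th ^ 2 + cos th ^ 2)) by (unfold Rdiv; ring).
  replace (sin th ^ 2 + cos th ^ 2) with 1 by (pose proof (sin2_cos2 th); unfold Rsqr in *; simpl; lra).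
  rewrite Rmult_1_r. apply sqrt_pow2. unfold Rdiv. apply Rmult_le_pos; [lra|left; apply Rinv_0_lt_compat; lra]. Qed.

Lemma maxle_le K g b : (forall k, (k <= K)%nat -> g k <= b) -> maxle K g <= b.
Proof. induction K; simpl; intros H. apply H; lia. apply Rmax_lub. apply IHK; intros; apply H; lia. apply H; lia. Qed.

Lemma maxpos_nonneg N g : 0 <= maxpos N g.
Proof. induction N; simpl. lra. eapply Rle_trans; [apply IHN|apply Rmax_l]. Qed.

Lemma maxpos_ge N g n : (1 <= n <= N)%nat -> g n <= maxpos N g.
Proof. induction N; intros H; [lia|]. simpl. destruct (Nat.eq_dec n (S N)).
  subst. apply Rmax_r. eapply Rle_trans; [apply IHN; lia|apply Rmax_l]. Qed.

Lemma Cmod_real a : Cmod (a, 0) = Rabs a.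
Proof. unfold Cmod. simpl. rewrite <- sqrt_Rsqr_abs. f_equal. unfold Rsqr. ring. Qed.

Lemma E_bounds m (hm : forall k, (2 <= m k)%nat) l x : 0 <= E m l x <= INR (Mk m l).
Proof. unfold E. destruct (allz l x); split; try lra; apply pos_INR. Qed.

Lemma fK_bound m (hm : forall k, (2 <= m k)%nat) K k x :
  Cmod (fK m K k x) <= INR (Mk m (S K)) * (if allz K x then 1 else 0).
Proof. unfold fK. rewrite Cmod_real. destruct (allz K x) eqn:Ha.
  - pose proof (E_bounds m hm (Nat.min k (S K)) x). pose proof (E_bounds m hm (Nat.min k K) x).
    assert (INR (Mk m (Nat.min k (S K))) <= INR (Mk m (S K))) by (apply le_INR, Mk_mono; auto; lia).
    assert (INR (Mk m (Nat.min k K)) <= INR (Mk m (S K))) by (apply le_INR, Mk_mono; auto; lia).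
    apply Rabs_le. lra.
  - destruct (Nat.le_gt_cases k K).
    + rewrite Nat.min_l by lia. rewrite Nat.min_l by lia. rewrite Rminus_diag, Rabs_R0. lra.
    + rewrite Nat.min_r by lia. rewrite Nat.min_r by lia. unfold E. simpl. rewrite Ha. simpl.
      rewrite Rminus_diag, Rabs_R0. lra. Qed.

Lemma fstar_bound m (hm : forall k, (2 <= m k)%nat) K K' :
  fstar_half m (fK m K) K' <= sqrt (INR (Mk m (S K))) / INR (Mk m K).
Proof. unfold fstar_half.
  assert (HMK : 0 < INR (Mk m K)) by (apply lt_0_INR; apply (Mk_pos m hm)).
  destruct (Nat.le_gt_cases K' K).
  - eapply Rle_trans. apply (integ_le m hm K' _ (fun _ => 0)).
    + intros t Ht. rewrite <- sqrt_0. apply sqrt_le_1_alt. apply maxle_le. intros k Hk.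
      unfold fK. rewrite Nat.min_l by lia. rewrite Nat.min_l by lia. rewrite Rminus_diag, Cmod_real, Rabs_R0. lra.
    + rewrite integ_zero. unfold Rdiv. apply Rmult_le_pos. apply sqrt_pos. left; apply Rinv_0_lt_compat; auto.
  - eapply Rle_trans. apply (integ_le m hm K' _ (fun x => sqrt (INR (Mk m (S K))) * (if allz K x then 1 else 0))).
    + intros t Ht. set (x := cpoint m K' t). destruct (allz K x) eqn:Ha.
      * rewrite Rmult_1_r. apply sqrt_le_1_alt. apply maxle_le. intros k Hk. pose proof (fK_bound m hm K k x). rewrite Ha in H0. lra.
      * rewrite Rmult_0_r. rewrite <- sqrt_0. apply sqrt_le_1_alt. apply maxle_le. intros k Hk. pose proof (fK_bound m hm K k x). rewrite Ha in H0. lra.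
    + rewrite integ_scal. rewrite (integ_indep m hm K).
      * rewrite (integ_allz m hm K (fun _ => 1)). right; field. lra.
      * intros x y Hxy. rewrite (allz_ext K x y); auto.
      * lia. Qed.

Lemma rsum_nonzero n : rsum (S n) (fun a => if (a =? 0)%nat then 0 else 1) = INR n.
Proof. induction n. simpl. ring. cbn [rsum] in *. rewrite IHn. simpl Nat.eqb. cbv iota. rewrite (S_INR n). ring. Qed.

Lemma integ_shell m (hm : forall k, (2 <= m k)%nat) tau N : (S tau <= N)%nat ->
  integ m N (fun x => if allz tau x && negb (x tau =? 0)%nat then 1 else 0) =
  (INR (m tau) - 1) / (INR (m tau) * INR (Mk m tau)).
Proof. intros HN. rewrite (integ_indep m hm (S tau)); [| |lia].
  - rewrite integ_tower by auto.
    rewrite (rsum_ext _ _ (fun a => (if (a =? 0)%nat then 0 else 1) / INR (Mk m tau))).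
    + unfold Rdiv. rewrite (rsum_ext _ _ (fun a => / INR (Mk m tau) * (if (a =? 0)%nat then 0 else 1))) by (intros; ring).
      rewrite rsum_scal. pose proof (hm tau). destruct (m tau) as [|mm] eqn:Hm; [lia|].
      rewrite rsum_nonzero. rewrite S_INR. pose proof (Mk_pos m hm tau).
      assert (INR (Mk m tau) <> 0) by (apply not_0_INR; lia). assert (INR mm + 1 <> 0) by (pose proof (pos_INR mm); lra).
      field. auto.
    + intros a Ha. rewrite (integ_ext _ _ _ (fun x => if allz tau x then (if (a =? 0)%nat then 0 else 1) else 0)).
      * apply integ_allz; auto.
      * intros x. rewrite allz_upd, upd_same. destruct (allz tau x); simpl; [|reflexivity].
        destruct (a =? 0)%nat; reflexivity.
  - intros x y H. rewrite (allz_ext tau x y) by (intros; apply H; lia). rewrite H by lia. reflexivity.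
Qed.

Lemma real_ineq M n MK Phi p : 2 <= M -> 0 < n <= 2 * MK -> 1 <= p <= Phi ->
  M ^ 2 / (8 * MK * Phi) <= M * (M - 1) / 2 / n / p.
Proof. intros HM Hn Hp.
  apply Rle_trans with (M * (M - 1) / (4 * MK * Phi)).
  - unfold Rdiv. replace (/ (8 * MK * Phi)) with (/2 * / (4 * MK * Phi)) by (field; nra).
    assert (0 < / (4 * MK * Phi)) by (apply Rinv_0_lt_compat; nra).
    assert (M ^ 2 * / 2 <= M * (M - 1)) by nra. nra.
  - replace (M * (M - 1) / 2 / n / p) with (M * (M - 1) * / (2 * n * p)) by (field; lra).
    unfold Rdiv. apply Rmult_le_compat_l. nra. apply Rinv_le_contravar. nra. nra. Qed.

Definition ind tau (x : point_t) : R := if allz tau x && negb (x tau =? 0)%nat then 1 else 0.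

Lemma ind_disj tau1 tau2 x : tau1 <> tau2 -> ind tau1 x = 1 -> ind tau2 x = 0.
Proof. unfold ind. intros Hne H1. destruct (allz tau1 x && negb (x tau1 =? 0)%nat) eqn:E1; [|lra].
  destruct (allz tau2 x && negb (x tau2 =? 0)%nat) eqn:E2; [|reflexivity].
  exfalso. apply andb_true_iff in E1, E2. destruct E1 as [A1 B1]. destruct E2 as [A2 B2].
  rewrite allz_spec in A1, A2. apply negb_true_iff, Nat.eqb_neq in B1, B2.
  destruct (Nat.lt_total tau1 tau2) as [H|[H|H]]; [apply B1, A2; auto|lia|apply B2, A1; auto]. Qed.

Lemma ind_01 tau x : ind tau x = 0 \/ ind tau x = 1.
Proof. unfold ind. destruct (_ && _); auto. Qed.

Lemma ind_allz tau x : ind tau x = 1 -> allz tau x = true.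
Proof. unfold ind. destruct (allz tau x); simpl; auto. intros; lra. Qed.

Lemma Tphi_lower m (hm : forall k, (2 <= m k)%nat) phi
  (hphi1 : forall n, (1 <= n)%nat -> 1 <= phi n)
  (hmono : forall n n', (1 <= n)%nat -> (n <= n')%nat -> phi n <= phi n') K :
  let N := (2 * Mk m K)%nat in
  let kap := / sqrt (8 * INR (Mk m K) * phi N) in
  kap * INR (K - 1) / 2 <= Tphi_half m phi (fK m K) N.
Proof. intros N kap.
  pose proof (Mk_pos m hm K) as HMK0. assert (HMK : 0 < INR (Mk m K)) by (apply lt_0_INR; lia).
  assert (HPhi : 1 <= phi N) by (apply hphi1; lia).
  assert (Hkap : 0 < kap) by (unfold kap; apply Rinv_0_lt_compat, sqrt_lt_R0; nra).
  assert (Hpt : forall x, rsum (K - 1) (fun u => kap * INR (Mk m (S u)) * ind (S u) x) <=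
     sqrt (maxpos N (fun n => Cmod (Defs.sigma m (fK m K) n x) / phi n))).
  { intros x. destruct (classic (exists u, (u < K - 1)%nat /\ ind (S u) x = 1)) as [[u0 [Hu0 Hi0]]|Hno].
    - rewrite (rsum_single _ u0); auto.
      2:{ intros k Hk Hne. rewrite (ind_disj (S u0) (S k) x) by (auto; lia). ring. }
      rewrite Hi0, Rmult_1_r.
      set (tau := S u0). set (M := INR (Mk m tau)). set (n := (Mk m K + Mk m tau)%nat).
      assert (HtK : (tau < K)%nat) by (unfold tau; lia).
      assert (HM2 : 2 <= M).
      { unfold M. apply (le_INR 2). assert (H1t : (1 <= tau)%nat) by (unfold tau; lia).
        pose proof (Mk_mono m hm 1 tau H1t) as HH. change (Mk m 1) with (m 0%nat * 1)%nat in HH. pose proof (hm 0%nat). lia. }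
      assert (HMt : (Mk m tau <= Mk m K)%nat) by (apply Mk_mono; auto; lia).
      assert (Hn1 : (1 <= n <= N)%nat) by (unfold n, N; lia).
      assert (Hnpos : 0 < INR n) by (apply lt_0_INR; lia).
      assert (Hn2 : INR n <= 2 * INR (Mk m K)) by (unfold n; rewrite plus_INR; apply le_INR in HMt; fold M in HMt |- *; lra).
      assert (Hp : 1 <= phi n <= phi N) by (split; [apply hphi1; lia|apply hmono; lia]).
      eapply Rle_trans; [|apply sqrt_le_1_alt; apply (maxpos_ge N _ n Hn1)].
      change (kap * M <= sqrt (Cmod (Defs.sigma m (fK m K) n x) / phi n)). unfold n. rewrite (sigma_val m hm K tau x HtK (ind_allz _ _ Hi0)). fold M. fold n.
      assert (Hkm : 0 <= kap * M) by nra.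
      rewrite <- (sqrt_pow2 (kap * M) Hkm). apply sqrt_le_1_alt.
      replace ((kap * M) ^ 2) with (M ^ 2 / (8 * INR (Mk m K) * phi N)).
      + apply real_ineq; lra.
      + unfold kap. rewrite Rpow_mult_distr. rewrite pow_inv. rewrite pow2_sqrt by nra. field. nra.
    - rewrite rsum_zero. apply sqrt_pos. intros k Hk. destruct (ind_01 (S k) x) as [H|H].
      rewrite H; ring. exfalso; apply Hno; eauto. }
  unfold Tphi_half. eapply Rle_trans; [|apply (integ_le m hm N (fun x => rsum (K - 1) (fun u => kap * INR (Mk m (S u)) * ind (S u) x))); intros t _; apply Hpt].
  rewrite integ_rsum. unfold ind. 
  rewrite (rsum_ext _ _ (fun u => kap * INR (Mk m (S u)) * ((INR (m (S u)) - 1) / (INR (m (S u)) * INR (Mk m (S u)))))).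
  2:{ intros u Hu. rewrite integ_scal. rewrite integ_shell; auto. pose proof (Mk_ge m hm K). unfold N; lia. }
  apply Rle_trans with (rsum (K - 1) (fun _ => kap / 2)).
  - rewrite rsum_const. right; field.
  - apply rsum_le. intros u Hu. pose proof (hm (S u)). pose proof (Mk_pos m hm (S u)).
    assert (2 <= INR (m (S u))) by (apply (le_INR 2); auto).
    assert (0 < INR (Mk m (S u))) by (apply lt_0_INR; lia).
    replace (kap * INR (Mk m (S u)) * ((INR (m (S u)) - 1) / (INR (m (S u)) * INR (Mk m (S u)))))
      with (kap * ((INR (m (S u)) - 1) / INR (m (S u)))) by (field; lra).
    unfold Rdiv. apply Rmult_le_compat_l; [lra|].
    apply (Rmult_le_reg_r (INR (m (S u)))); [lra|]. field_simplify; lra. Qed.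

Lemma ln_le' x y : 0 < x -> x <= y -> ln x <= ln y.
Proof. intros Hx [H|H]. left; apply ln_increasing; auto. subst; lra. Qed.

Lemma find_K m (hm : forall k, (2 <= m k)%nat) n : (2 <= n)%nat -> exists K, (2 * Mk m K <= n < 2 * Mk m (S K))%nat.
Proof. induction n; intros H; [lia|]. destruct (Nat.eq_dec n 1).
  - subst. exists 0%nat. simpl. pose proof (hm 0%nat). lia.
  - destruct IHn as [K HK]; [lia|]. destruct (Nat.eq_dec (S n) (2 * Mk m (S K))).
    + exists (S K). pose proof (Mk_S m hm (S K)). lia.
    + exists K. lia. Qed.

Theorem corollary1
  (m : nat -> nat) (hm2 : forall k, (2 <= m k)%nat)
  (hbd : exists B, forall k, (m k <= B)%nat)
  (phi : nat -> R)
  (hphi1 : forall n, (1 <= n)%nat -> 1 <= phi n)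
  (hmono : forall n n', (1 <= n)%nat -> (n <= n')%nat -> phi n <= phi n')
  (hlimsup : forall (B : R) (N : nat), exists n, (N <= n)%nat /\ (1 <= n)%nat /\
                B < (ln (INR n + 1)) ^ 2 / phi n) :
  ~ (exists c : R, forall f : nat -> point_t -> Cx,
        martingale m f ->
        (exists B, forall K, fstar_half m f K <= B) ->
        forall B, (forall K, fstar_half m f K <= B) ->
        forall N, (Tphi_half m phi f N) ^ 2 <= c * B ^ 2).
Proof.
  intros [c Hc]. destruct hbd as [Bm HB].
  assert (HBm2 : (2 <= Bm)%nat) by (pose proof (hm2 0%nat); pose proof (HB 0%nat); lia).
  assert (HBmR : 2 <= INR Bm) by (apply (le_INR 2); auto).
  set (Lb := ln (INR Bm)).
  assert (HLb : 0 < Lb) by (unfold Lb; rewrite <- ln_1; apply ln_increasing; lra).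
  set (c' := Rmax c 1).
  assert (Hc1 : 1 <= c') by apply Rmax_r.
  assert (Hcc : c <= c') by apply Rmax_l.
  set (A := 128 * c' * INR Bm * Lb ^ 2).
  destruct (hlimsup A (2 * Mk m 6)%nat) as [n [Hn1 [Hn2 HA]]].
  destruct (find_K m hm2 n) as [K [HK1 HK2]].
  { pose proof (Mk_pos m hm2 6). lia. }
  assert (HK6 : (6 <= K)%nat).
  { destruct (Nat.le_gt_cases 6 K); auto. pose proof (Mk_mono m hm2 (S K) 6 ltac:(lia)). lia. }
  set (N := (2 * Mk m K)%nat).
  set (B0 := sqrt (INR (Mk m (S K))) / INR (Mk m K)).
  assert (Hbound : forall K', fstar_half m (fK m K) K' <= B0) by (intros; apply fstar_bound; auto).
  pose proof (Hc (fK m K) (fK_mart m hm2 K) (ex_intro _ B0 Hbound) B0 Hbound N) as Hmain.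
  pose proof (Tphi_lower m hm2 phi hphi1 hmono K) as Hlow. cbv zeta in Hlow. fold N in Hlow.
  set (MK := INR (Mk m K)) in *. set (Phi := phi N) in *. set (T := Tphi_half m phi (fK m K) N) in *.
  assert (HMK : 0 < MK) by (unfold MK; apply lt_0_INR; apply (Mk_pos m hm2)).
  assert (HPhi : 1 <= Phi) by (unfold Phi; apply hphi1; unfold N; pose proof (Mk_pos m hm2 K); lia).
  assert (Hsq : 0 < 8 * MK * Phi) by nra.
  set (kap := / sqrt (8 * MK * Phi)) in *.
  assert (Hkap2 : kap ^ 2 = / (8 * MK * Phi)) by (unfold kap; rewrite pow_inv, pow2_sqrt; lra).
  assert (Hkap : 0 < kap) by (unfold kap; apply Rinv_0_lt_compat, sqrt_lt_R0; lra).
  set (k1 := INR (K - 1)) in *.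
  assert (Hk1 : k1 = INR K - 1) by (unfold k1; rewrite minus_INR by lia; simpl; ring).
  assert (HK6R : 6 <= INR K) by (replace 6 with (INR 6) by (simpl; ring); apply le_INR; auto).
  assert (HT2 : (k1 ^ 2) / (32 * MK * Phi) <= T ^ 2).
  { assert (0 <= kap * k1 / 2) by (rewrite Hk1; apply Rmult_le_pos; [apply Rmult_le_pos; lra|lra]).
    apply Rle_trans with ((kap * k1 / 2) ^ 2); [|apply pow_incr; auto].
    right. replace ((kap * k1 / 2) ^ 2) with (kap ^ 2 * k1 ^ 2 / 4) by field. rewrite Hkap2. field. lra. }
  assert (HB0 : B0 ^ 2 <= INR Bm / MK).
  { unfold B0. fold MK. replace ((sqrt (INR (Mk m (S K))) / MK) ^ 2) with (sqrt (INR (Mk m (S K))) ^ 2 / MK ^ 2) by (field; lra).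
    rewrite pow2_sqrt by apply pos_INR. simpl (Mk m (S K)). rewrite mult_INR. fold MK.
    assert (INR (m K) <= INR Bm) by (apply le_INR; auto).
    apply (Rmult_le_reg_r (MK ^ 2)). nra. field_simplify; try lra. nra. }
  assert (HPn : Phi <= phi n) by (unfold Phi, N; apply hmono; [pose proof (Mk_pos m hm2 K); lia| lia]).
  assert (Hphin : 1 <= phi n) by (apply hphi1; auto).
  assert (Hln : ln (INR n + 1) <= (INR K + 2) * Lb).
  { assert (Hnat : (n + 1 <= Bm ^ (K + 2))%nat).
    { pose proof (Mk_le_pow m Bm HB (S K)) as HP. replace (K + 2)%nat with (S (S K)) by lia.
      change (Bm ^ S (S K))%nat with (Bm * (Bm * Bm ^ K))%nat. change (Bm ^ S K)%nat with (Bm * Bm ^ K)%nat in HP.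
      set (P := (Bm ^ K)%nat) in *. set (Q := Mk m (S K)) in *. nia. }
    apply le_INR in Hnat. rewrite plus_INR, pow_INR in Hnat. simpl (INR 1) in Hnat.
    eapply Rle_trans. apply ln_le'. pose proof (pos_INR n); lra. apply Hnat.
    rewrite ln_pow by lra. fold Lb. rewrite plus_INR. simpl (INR 2). lra. }
  assert (Hln0 : 0 <= ln (INR n + 1)) by (rewrite <- ln_1; apply ln_le'; [lra|pose proof (pos_INR n); lra]).
  assert (HAphi : A * phi n < ln (INR n + 1) ^ 2).
  { apply (Rmult_lt_compat_r (phi n)) in HA; [|lra]. unfold Rdiv in HA. rewrite Rmult_assoc, Rinv_l in HA by lra. lra. }
  assert (Hln2 : ln (INR n + 1) ^ 2 <= ((INR K + 2) * Lb) ^ 2) by (apply pow_incr; lra).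
  assert (Hkey : 32 * c' * INR Bm * Phi < k1 ^ 2).
  { assert (H128 : 128 * c' * INR Bm * Phi * Lb ^ 2 < (INR K + 2) ^ 2 * Lb ^ 2).
    { assert (A * Phi <= A * phi n) by (apply Rmult_le_compat_l; [unfold A; apply Rmult_le_pos; [nra|apply pow2_ge_0]|lra]).
      unfold A in *. nra. }
    assert (128 * c' * INR Bm * Phi < (INR K + 2) ^ 2).
    { apply (Rmult_lt_reg_r (Lb ^ 2)). apply pow_lt; lra. lra. }
    rewrite Hk1. nra. }
  assert (HcB : c * B0 ^ 2 <= c' * (INR Bm / MK)).
  { apply Rle_trans with (c' * B0 ^ 2). apply Rmult_le_compat_r; [apply pow2_ge_0|lra].
    apply Rmult_le_compat_l; lra. }
  assert (Hfin : c' * (INR Bm / MK) < k1 ^ 2 / (32 * MK * Phi)).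
  { apply (Rmult_lt_reg_r (32 * MK * Phi)). nra.
    replace (c' * (INR Bm / MK) * (32 * MK * Phi)) with (32 * c' * INR Bm * Phi) by (field; lra).
    replace (k1 ^ 2 / (32 * MK * Phi) * (32 * MK * Phi)) with (k1 ^ 2) by (field; lra). lra. }
  lra.
Qed.
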